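(* Let $E>0$, $J>0$, $|\alpha|\le 1$, and let $H_0$ be either $E(\sigma_x\otimes I_2+\sigma_y\otimes I_2+I_2\otimes\sigma_x+I_2\otimes\sigma_y)$ or $E(\sigma_z\otimes I_2+I_2\otimes\sigma_z)$. Let $$H=H_0+\alpha J(\sigma_x\otimes\sigma_x+\sigma_y\otimes\sigma_y)+\beta J\,\sigma_z\otimes\sigma_z,$$ where either $\beta=1$ (Ising model for $\alpha=0$, XXZ model for $\alpha\neq0$, XXX model for $\alpha=1$) or $\beta=0$ and $\alpha\ne 0$ (XX model). Then for every two-qubit density matrix $\rho$, $\mathcal{C}(\rho;H_0)\le\mathcal{C}(\rho;H)$; consequently $\mathcal{C}(\rho_A;H_A)+\mathcal{C}(\rho_B;H_B)\le\mathcal{C}(\rho;H)$, where $H_A=H_B=E(\sigma_x+\sigma_y)$ in the first case and $H_A=H_B=E\sigma_z$ in the second, and $\rho_A,\rho_B$ are the reduced states of $\rho$.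
   Context: Quantum battery capacity: for a Hermitian $H$ on $\mathbb{C}^d$ with eigenvalues $\epsilon_0\le\dots\le\epsilon_{d-1}$ and a density matrix $\rho$ with eigenvalues $\lambda_0\le\dots\le\lambda_{d-1}$, $\mathcal{C}(\rho;H)=\sum_{i=0}^{d-1}\epsilon_i(\lambda_i-\lambda_{d-1-i})$. $\sigma_x,\sigma_y,\sigma_z$ are the Pauli matrices. *)

(* Defs.v *)
(* Complex scalars: an arbitrary numClosedFieldType C
   (e.g. complex R for R : rcfType, algC). *)
From HB Require Import structures.
From mathcomp Require Import all_boot all_order all_algebra.
From mathcomp Require Import mxtens.
From Stdlib Require Import ClassicalEpsilon.
Set Implicit Arguments. Unset Strict Implicit. Unset Printing Implicit Defensive.
Import Order.TTheory GRing.Theory Num.Theory.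
Local Open Scope ring_scope.

Section QB.
Variable C : numClosedFieldType.

Definition adjmx {m n} (A : 'M[C]_(m, n)) : 'M[C]_(n, m) := (map_mx Num.conj A)^T.

Definition hermitian {n} (A : 'M[C]_n) : Prop := adjmx A = A.

Definition psd {n} (A : 'M[C]_n) : Prop :=
  forall v : 'cV[C]_n, 0 <= (adjmx v *m A *m v) 0 0.

Definition density_matrix {n} (rho : 'M[C]_n) : Prop :=
  hermitian rho /\ psd rho /\ \tr rho = 1.

Definition is_sorted_spectrum {n} (A : 'M[C]_n) (s : seq C) : Prop :=
  [/\ size s = n, all (fun x => x \is Num.real) s, sorted <=%R s &
      char_poly A = \prod_(x <- s) ('X - x%:P)].

(* eigenvalues in nondecreasing order (well defined for Hermitian A) *)
Definition spectrum {n} (A : 'M[C]_n) : seq C :=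
  epsilon (inhabits [::]) (is_sorted_spectrum A).

Definition capacity {n} (rho H : 'M[C]_n) : C :=
  \sum_(i < n) (spectrum H)`_i * ((spectrum rho)`_i - (spectrum rho)`_(n.-1 - i)).

Definition sx : 'M[C]_2 := \matrix_(i, j) (if i == j then 0 else 1).
Definition sy : 'M[C]_2 :=
  \matrix_(i, j) (if i == j then 0 else if (i : nat) == 0%N then - 'i else 'i).
Definition sz : 'M[C]_2 :=
  \matrix_(i, j) (if i == j then (if (i : nat) == 0%N then 1 else -1) else 0).
Definition I2 : 'M[C]_2 := 1%:M.

(* two-qubit space C^2 (x) C^2 = C^(2*2); A (x) B is mathcomp's tensmx *)
Definition ptraceB (rho : 'M[C]_(2 * 2)) : 'M[C]_2 :=  (* rho_A = Tr_B rho *)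
  \matrix_(i, j) \sum_(k < 2) rho (mxtens_index (i, k)) (mxtens_index (j, k)).
Definition ptraceA (rho : 'M[C]_(2 * 2)) : 'M[C]_2 :=  (* rho_B = Tr_A rho *)
  \matrix_(i, j) \sum_(k < 2) rho (mxtens_index (k, i)) (mxtens_index (k, j)).

Definition Hloc (b : bool) (E : C) : 'M[C]_2 := if b then E *: (sx + sy) else E *: sz.

Definition H0 (b : bool) (E : C) : 'M[C]_(2 * 2) :=
  tensmx (Hloc b E) I2 + tensmx I2 (Hloc b E).

Definition Hint (alpha beta J : C) : 'M[C]_(2 * 2) :=
  (alpha * J) *: (tensmx sx sx + tensmx sy sy) + (beta * J) *: tensmx sz sz.
End QB.

(* Main.v *)
From Pilot Require Import Defs.
From Stdlib Require Import ClassicalEpsilon.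
From HB Require Import structures.
From mathcomp Require Import all_boot all_order all_algebra.
From mathcomp Require Import mxtens ring.
From mathcomp Require Import sesquilinear spectral.
Import Pilot.Defs.
Import Order.TTheory GRing.Theory Num.Theory Num.Def.
Local Open Scope ring_scope.
Set Implicit Arguments. Unset Strict Implicit. Unset Printing Implicit Defensive.

Section S.
Variable C : numClosedFieldType.

Lemma adjmxE m n (A : 'M[C]_(m,n)) i j : adjmx A i j = (A j i)^*.
Proof. by rewrite /adjmx !mxE. Qed.

Lemma adjmxM m n p (A : 'M[C]_(m,n)) (B : 'M[C]_(n,p)) :
  adjmx (A *m B) = adjmx B *m adjmx A.
Proof. by rewrite /adjmx map_mxM trmx_mul. Qed.

Lemma adjmxK m n (A : 'M[C]_(m,n)) : adjmx (adjmx A) = A.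
Proof. by apply/matrixP=> i j; rewrite !adjmxE conjCK. Qed.

Lemma herm_sym n (A : 'M[C]_n) : hermitian A -> A \is hermsymmx.
Proof.
move=> hA; apply/is_hermitianmxP; rewrite expr0 scale1r.
by rewrite -{1}hA /adjmx map_trmx.
Qed.

Lemma herm_decomp n (A : 'M[C]_n) : hermitian A ->
  exists Q : 'M[C]_n, exists d : 'rV[C]_n,
   [/\ adjmx Q *m Q = 1%:M, Q *m adjmx Q = 1%:M, (forall i, d 0 i \is Num.real)
     & A = Q *m diag_mx d *m adjmx Q].
Proof.
move=> hA; have hs := herm_sym hA.
have /orthomx_spectralP eA := hermitian_normalmx hs.
have hr := hermitian_spectral_diag_real hs.
set P := spectralmx A in eA; have Pu : P \is unitarymx by exact: spectral_unitarymx.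
have PPt : P *m adjmx P = 1%:M.
  by move/unitarymxP: Pu; rewrite /adjmx map_trmx.
have Pi : invmx P = adjmx P by rewrite invmx_unitary // /adjmx map_trmx.
exists (adjmx P), (spectral_diag A); split.
- by rewrite adjmxK.
- by rewrite adjmxK -Pi mulVmx // unitarymx_unit.
- by move=> i; exact: (mxOverP hr).
- by rewrite adjmxK -Pi.
Qed.

Lemma char_poly_conjQ n (Q A : 'M[C]_n) : adjmx Q *m Q = 1%:M -> Q *m adjmx Q = 1%:M ->
  char_poly (Q *m A *m adjmx Q) = char_poly A.
Proof.
move=> QQ1 QQ2; rewrite /char_poly /char_poly_mx.
set Qp := map_mx polyC Q; set Qa := map_mx polyC (adjmx Q).
have e : Qp *m Qa = 1%:M by rewrite -map_mxM QQ2 map_mx1.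
have e2 : Qa *m Qp = 1%:M by rewrite -map_mxM QQ1 map_mx1.
rewrite !map_mxM -/Qp -/Qa.
have -> : 'X%:M - Qp *m map_mx polyC A *m Qa = Qp *m ('X%:M - map_mx polyC A) *m Qa.
  by rewrite mulmxBr mulmxBl mul_mx_scalar -scalemxAl e scalemx1.
rewrite !det_mulmx mulrC mulrA -det_mulmx e2 det1 mul1r //.
Qed.

Definition spec_list n (d : 'rV[C]_n) := [seq d 0 i | i <- enum 'I_n].

Lemma char_poly_diag n (d : 'rV[C]_n) :
  char_poly (diag_mx d) = \prod_(x <- spec_list d) ('X - x%:P).
Proof.
rewrite char_poly_trig ?diag_mx_is_trig // /spec_list big_map big_enum /=.
by apply: eq_bigr => i _; rewrite mxE eqxx mulr1n.
Qed.

Lemma spec_unique n (A : 'M[C]_n) s : is_sorted_spectrum A s -> spectrum A = s.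
Proof.
move=> hs; have := epsilon_spec (inhabits [::]) (is_sorted_spectrum A) (ex_intro _ s hs).
rewrite -/(spectrum A); case=> _ _ so1 cp1; case: hs => _ _ so2 cp2.
apply: (sorted_eq le_trans le_anti) => //; apply: prod_XsubC_eq.
by rewrite -cp1 -cp2.
Qed.

Lemma spec_decomp n (A : 'M[C]_n) : hermitian A ->
  exists Q : 'M[C]_n, exists d : 'rV[C]_n,
   [/\ adjmx Q *m Q = 1%:M, Q *m adjmx Q = 1%:M, A = Q *m diag_mx d *m adjmx Q,
     perm_eq (spectrum A) (spec_list d) & is_sorted_spectrum A (spectrum A)].
Proof.
move=> /herm_decomp [Q [d [Q1 Q2 dr eA]]].
have allr : all (fun x => x \is Num.real) (spec_list d).
  by apply/allP => x /mapP [i _ ->].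
have hs : is_sorted_spectrum A (sort <=%R (spec_list d)).
  have ps : perm_eq (sort <=%R (spec_list d)) (spec_list d).
    by apply/permPl; apply: perm_sort.
  split.
  - by rewrite size_sort size_map size_enum_ord.
  - by rewrite all_sort.
  - apply: (sort_sorted_in (P := fun x => x \is Num.real)) => //.
    by move=> x y xr yr; exact: real_leVge.
  - by rewrite eA char_poly_conjQ // char_poly_diag; apply: perm_big; rewrite perm_sym.
exists Q, d; rewrite (spec_unique hs); split => //.
by apply/permPl; apply: perm_sort.
Qed.


Definition Ray n (A : 'M[C]_n) (v : 'cV[C]_n) : C := (adjmx v *m A *m v) 0 0.
Definition unitv n (v : 'cV[C]_n) := (adjmx v *m v) 0 0 = 1.

Lemma norm2E n (y : 'cV[C]_n) : (adjmx y *m y) 0 0 = \sum_i `|y i 0| ^+ 2.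
Proof. by rewrite mxE; apply: eq_bigr => i _; rewrite adjmxE normCKC. Qed.

Lemma ray_diag n (d : 'rV[C]_n) y : Ray (diag_mx d) y = \sum_i d 0 i * `|y i 0| ^+ 2.
Proof.
rewrite /Ray mul_mx_diag mxE; apply: eq_bigr => i _.
by rewrite mxE adjmxE normCKC mulrCA mulrA mulrC.
Qed.

Lemma ray_conj n (Q D : 'M[C]_n) v : Ray (Q *m D *m adjmx Q) v = Ray D (adjmx Q *m v).
Proof. by rewrite /Ray adjmxM adjmxK !mulmxA. Qed.

Lemma sorted_bounds (s : seq C) x : sorted <=%R s -> x \in s ->
  s`_0 <= x /\ x <= s`_(size s).-1.
Proof.
move=> so xs; have ix : (index x s < size s)%N by rewrite index_mem.
rewrite -(nth_index 0 xs); split.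
  by apply: (sorted_leq_nth le_trans lexx) => //; rewrite inE /= (leq_ltn_trans _ ix).
apply: (sorted_leq_nth le_trans lexx) => //; rewrite ?inE /=.
  by rewrite prednK // (leq_ltn_trans _ ix).
by rewrite -ltnS prednK // (leq_ltn_trans _ ix).
Qed.

Lemma ray_bounds n (A : 'M[C]_n.+1) v : hermitian A -> unitv v ->
  (spectrum A)`_0 <= Ray A v /\ Ray A v <= (spectrum A)`_n.
Proof.
move=> hA uv; have [Q [d [Q1 Q2 eA pe [sz _ so _]]]] := spec_decomp hA.
set y := adjmx Q *m v.
have ny : \sum_i `|y i 0| ^+ 2 = 1.
  by rewrite -norm2E /y adjmxM adjmxK mulmxA -(mulmxA (adjmx v)) Q2 mulmx1.
have dm i : d 0 i \in spectrum A.
  by rewrite (perm_mem pe); apply: map_f; rewrite mem_enum.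
have -> : Ray A v = \sum_i d 0 i * `|y i 0| ^+ 2 by rewrite eA ray_conj ray_diag.
have := sorted_bounds so (dm _); rewrite sz /= => bd.
split.
  rewrite -[X in X <= _]mulr1 -ny mulr_sumr; apply: ler_sum => i _.
  by apply: ler_wpM2r; [rewrite exprn_ge0 | case: (bd i)].
rewrite -[X in _ <= X]mulr1 -ny mulr_sumr; apply: ler_sum => i _.
by apply: ler_wpM2r; [rewrite exprn_ge0 | case: (bd i)].
Qed.


Definition ONB (u0 u1 : 'cV[C]_2) :=
  [/\ unitv u0, unitv u1 &
      forall b c : 'I_2, u0 b 0 * (u0 c 0)^* + u1 b 0 * (u1 c 0)^* = (b == c)%:R].

Lemma ONB_sym u0 u1 : ONB u0 u1 -> ONB u1 u0.
Proof. by case=> a b c; split => // x y; rewrite addrC. Qed.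

Lemma ray_eig n (A : 'M[C]_n) (u : 'cV_n) a : unitv u -> A *m u = a *: u -> Ray A u = a.
Proof. by move=> uu e; rewrite /Ray -mulmxA e -scalemxAr mxE uu mulr1. Qed.

Lemma colM m n p (A : 'M[C]_(m,n)) (B : 'M[C]_(n,p)) k : col k (A *m B) = A *m col k B.
Proof. by rewrite !colE mulmxA. Qed.

Lemma adj_col m n (W : 'M[C]_(m,n)) k : adjmx (col k W) = row k (adjmx W).
Proof. by apply/matrixP => i j; rewrite !mxE. Qed.

Lemma rowcol m n p (X : 'M[C]_(m,n)) (W : 'M[C]_(n,p)) i k :
  (row i X *m col k W) 0 0 = (X *m W) i k.
Proof. by rewrite !mxE; apply: eq_bigr => j _; rewrite !mxE. Qed.

Lemma ray_col n (A W : 'M[C]_n) k : Ray A (col k W) = (adjmx W *m A *m W) k k.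
Proof. by rewrite /Ray adj_col -row_mul rowcol. Qed.

Lemma unit_col n (W : 'M[C]_n) k : adjmx W *m W = 1%:M -> unitv (col k W).
Proof. by move=> e; rewrite /unitv adj_col rowcol e mxE eqxx. Qed.

Lemma sum2 (F : 'I_2 -> C) : \sum_i F i = F 0 + F 1.
Proof.
rewrite big_ord_recl big_ord1; congr (_ + F _); exact: val_inj.
Qed.

Lemma ONB_cols (Q : 'M[C]_2) : adjmx Q *m Q = 1%:M -> Q *m adjmx Q = 1%:M ->
  ONB (col 0 Q) (col 1 Q).
Proof.
move=> Q1 Q2; split; try exact: unit_col.
move=> b c; have := congr1 (fun M : 'M[C]_2 => M b c) Q2; rewrite /= !mxE sum2 !mxE => <-.
by [].
Qed.

Lemma perm2 (x y a b : C) : perm_eq [:: x; y] [:: a; b] ->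
  (x = a /\ y = b) \/ (x = b /\ y = a).
Proof.
move=> pe; have : x \in [:: a; b] by rewrite -(perm_mem pe) mem_head.
rewrite !inE => /orP [/eqP ex|/eqP ex].
  left; split => //; move: pe; rewrite ex perm_cons => /perm_mem /(_ y).
  by rewrite !inE eqxx => /esym /eqP.
right; split => //; move: pe; rewrite ex => pe.
have : perm_eq [:: b; y] [:: b; a].
  by apply: (perm_trans pe); rewrite (perm_catC [:: a] [:: b]).
rewrite perm_cons => /perm_mem /(_ y); rewrite !inE eqxx => /esym /eqP //.
Qed.

Lemma eig2 (h : 'M[C]_2) : hermitian h ->
  exists u0 u1, [/\ ONB u0 u1, h *m u0 = (spectrum h)`_0 *: u0,
     h *m u1 = (spectrum h)`_1 *: u1 & is_sorted_spectrum h (spectrum h)].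
Proof.
move=> hh; have [Q [d [Q1 Q2 eh pe ss]]] := spec_decomp hh.
have hQ : h *m Q = Q *m diag_mx d.
  by rewrite eh -!mulmxA Q1 mulmx1.
have eig k : h *m col k Q = d 0 k *: col k Q.
  by apply/matrixP => i j; rewrite -colM hQ mul_mx_diag !mxE mulrC.
have onb := ONB_cols Q1 Q2.
have sl : spec_list d = [:: d 0 0; d 0 1].
  by rewrite /spec_list enum_ordSl enum_ordSl enum_ord0 /=; congr [:: _; d 0 _]; exact: val_inj.
have sz : size (spectrum h) = 2 by case: ss.
move: pe sz ss; rewrite sl; case: (spectrum h) => [|x [|y [|]]] //= pe _ ss.
move: ss; have [[-> ->]|[-> ->]] := perm2 pe => ss.
- by exists (col 0 Q), (col 1 Q); split.
- by exists (col 1 Q), (col 0 Q); split => //; apply: ONB_sym.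
Qed.


Lemma rayE n (A : 'M[C]_n) v : Ray A v = \sum_i \sum_j (v i 0)^* * A i j * v j 0.
Proof.
rewrite /Ray mxE; under eq_bigr do rewrite mxE mulr_suml.
rewrite exchange_big; apply: eq_bigr => i _; apply: eq_bigr => j _.
by rewrite adjmxE.
Qed.

Lemma adj_tens m n p q (A : 'M[C]_(m,n)) (B : 'M[C]_(p,q)) :
  adjmx (tensmx A B) = tensmx (adjmx A) (adjmx B).
Proof. by apply/matrixP => i j; rewrite !mxE rmorphM. Qed.

Lemma sum_tens m n (F : 'I_(m*n) -> C) :
  \sum_k F k = \sum_i \sum_j F (mxtens_index (i, j)).
Proof.
rewrite pair_big /= (reindex (@mxtens_unindex m n)) /=.
  by apply: eq_bigr => k _; rewrite -{1}(mxtens_unindexK k).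
by exists (@mxtens_index m n) => p _; rewrite ?mxtens_indexK ?mxtens_unindexK.
Qed.

Lemma tvE m n (u : 'cV[C]_m) (v : 'cV[C]_n) i j (k : 'I_1) :
  (tensmx u v : 'cV_(m*n)) (mxtens_index (i,j)) k = u i 0 * v j 0.
Proof. by rewrite mxE mxtens_indexK /=; congr (u _ _ * v _ _); apply: ord1. Qed.

Lemma ray_tens m n (A : 'M[C]_m) (B : 'M[C]_n) (u : 'cV[C]_m) (v : 'cV[C]_n) :
  Ray (tensmx A B) (tensmx u v) = Ray A u * Ray B v.
Proof.
rewrite !rayE sum_tens mulr_suml; apply: eq_bigr => i _.
under eq_bigr do rewrite sum_tens.
rewrite exchange_big mulr_suml; apply: eq_bigr => k _.
rewrite mulr_sumr; apply: eq_bigr => j _.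
rewrite mulr_sumr; apply: eq_bigr => l _.
rewrite !tvE tensmxE rmorphM /=; ring.
Qed.

Lemma tens1 m n : tensmx (1%:M : 'M[C]_m) (1%:M : 'M[C]_n) = 1%:M.
Proof.
apply/matrixP => p q; case: (mxtens_indexP p) => i j; case: (mxtens_indexP q) => k l.
rewrite tensmxE !mxE (inj_eq (can_inj (@mxtens_indexK m n))) xpair_eqE.
by case: (i =P k); case: (j =P l) => //= *; rewrite ?mulr0 ?mul0r ?mulr1.
Qed.

Lemma unitvE n (u : 'cV[C]_n) : unitv u <-> Ray 1%:M u = 1.
Proof. by rewrite /Ray mulmx1. Qed.

Lemma unit_tens m n (u : 'cV[C]_m) (v : 'cV[C]_n) :
  unitv u -> unitv v -> unitv (tensmx u v).
Proof. by rewrite !unitvE -tens1 ray_tens => -> ->; rewrite mulr1. Qed.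

Lemma rayD n (A B : 'M[C]_n) v : Ray (A + B) v = Ray A v + Ray B v.
Proof. by rewrite /Ray mulmxDr mulmxDl mxE. Qed.

Lemma rayZ n (A : 'M[C]_n) c v : Ray (c *: A) v = c * Ray A v.
Proof. by rewrite /Ray -scalemxAr -scalemxAl mxE. Qed.

Lemma ray_trace (A : 'M[C]_2) u0 u1 : ONB u0 u1 -> Ray A u0 + Ray A u1 = \tr A.
Proof.
case=> _ _ cpl; rewrite !rayE -big_split /=.
rewrite /mxtrace; apply: eq_bigr => i _.
have -> : A i i = (A *m 1%:M) i i by rewrite mulmx1.
rewrite mxE -big_split /=; apply: eq_bigr => j _.
rewrite mxE -(cpl j i); ring.
Qed.

Lemma sum_delta n (F : 'I_n -> C) b : \sum_c F c * (c == b)%:R = F b.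
Proof.
rewrite (bigD1 b) //= eqxx mulr1 big1 ?addr0 // => c /negbTE ->.
by rewrite mulr0.
Qed.

Lemma ptrB (rho : 'M[C]_(2*2)) u v0 v1 : ONB v0 v1 ->
  Ray (ptraceB rho) u = Ray rho (tensmx u v0) + Ray rho (tensmx u v1).
Proof.
case=> _ _ cpl; rewrite !rayE -big_split /= (@sum_tens 2 2); apply: eq_bigr => i _.
under [in RHS]eq_bigr => b _ do rewrite !(@sum_tens 2 2) -big_split /=.
rewrite [in RHS]exchange_big; apply: eq_bigr => j _.
under [in RHS]eq_bigr => b _ do rewrite -big_split /=.
rewrite mxE mulr_sumr mulr_suml; apply: eq_bigr => b _.
rewrite -(sum_delta (fun c => conjC (u i 0) * rho (mxtens_index (i, b)) (mxtens_index (j, c)) * u j 0) b).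
apply: eq_bigr => c _.
rewrite !tvE -(cpl c b) !rmorphM /=; ring.
Qed.


Lemma ptrA (rho : 'M[C]_(2*2)) v u0 u1 : ONB u0 u1 ->
  Ray (ptraceA rho) v = Ray rho (tensmx u0 v) + Ray rho (tensmx u1 v).
Proof.
case=> _ _ cpl; rewrite !rayE -big_split /= (@sum_tens 2 2) [in RHS]exchange_big.
apply: eq_bigr => i _.
under [in RHS]eq_bigr => a _ do rewrite !(@sum_tens 2 2) -big_split /=.
under [in RHS]eq_bigr => a _ do under eq_bigr => c _ do rewrite -big_split /=.
under [in RHS]eq_bigr => a _ do rewrite exchange_big.
rewrite [in RHS]exchange_big; apply: eq_bigr => j _.
rewrite mxE mulr_sumr mulr_suml; apply: eq_bigr => a _.
rewrite -(sum_delta (fun c => conjC (v i 0) * rho (mxtens_index (a, i)) (mxtens_index (c, j)) * v j 0) a).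
apply: eq_bigr => c _.
rewrite !tvE -(cpl c a) !rmorphM /=; ring.
Qed.


Lemma prod_tens m n (F : 'I_(m*n) -> {poly C}) :
  \prod_k F k = \prod_i \prod_j F (mxtens_index (i, j)).
Proof.
rewrite pair_big /= (reindex (@mxtens_unindex m n)) /=.
  by apply: eq_bigr => k _; rewrite -{1}(mxtens_unindexK k).
by exists (@mxtens_index m n) => p _; rewrite ?mxtens_indexK ?mxtens_unindexK.
Qed.

Lemma prod2 (F : 'I_2 -> {poly C}) : \prod_i F i = F 0 * F 1.
Proof.
rewrite big_ord_recl big_ord1; congr (_ * F _); exact: val_inj.
Qed.

Lemma spec_H0 (h : 'M[C]_2) : hermitian h ->
  spectrum (tensmx h 1%:M + tensmx 1%:M h) =
  [:: (spectrum h)`_0 + (spectrum h)`_0; (spectrum h)`_0 + (spectrum h)`_1;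
      (spectrum h)`_0 + (spectrum h)`_1; (spectrum h)`_1 + (spectrum h)`_1].
Proof.
move=> hh; have [Q [d [Q1 Q2 eh pe ss]]] := spec_decomp hh.
have sl : spec_list d = [:: d 0 0; d 0 1].
  by rewrite /spec_list enum_ordSl enum_ordSl enum_ord0 /=; congr [:: _; d 0 _]; exact: val_inj.
have sz : size (spectrum h) = 2 by case: ss.
move: pe sz ss; rewrite sl; case: (spectrum h) => [|a0 [|a1 [|]]] //= pe _ [_ sr so _].
move: sr so; rewrite /= !andbT => /andP [r0 r1] le01.
apply: spec_unique.
set QQ := tensmx Q Q.
set M := tensmx (diag_mx d) 1%:M + tensmx 1%:M (diag_mx d).
have QQ1 : adjmx QQ *m QQ = 1%:M by rewrite adj_tens tensmx_mul Q1 tens1.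
have QQ2 : QQ *m adjmx QQ = 1%:M by rewrite adj_tens tensmx_mul Q2 tens1.
have eH : tensmx h 1%:M + tensmx 1%:M h = QQ *m M *m adjmx QQ.
  rewrite mulmxDr mulmxDl adj_tens !tensmx_mul -eh mulmx1 Q2 //.
have cpM : char_poly M = \prod_i \prod_j ('X - (d 0 i + d 0 j)%:P).
  have eM : M = diag_mx (\row_k (d 0 (mxtens_unindex k).1 + d 0 (mxtens_unindex k).2)).
    apply/matrixP => p q; case: (mxtens_indexP p) => i j; case: (mxtens_indexP q) => k l.
    rewrite !mxE !mxtens_indexK /= (inj_eq (can_inj (@mxtens_indexK 2 2))) xpair_eqE.
    case: (i =P k) => [->|_]; case: (j =P l) => [->|_];
      by rewrite /= ?mulr1n ?mulr0n ?mulr1 ?mul1r ?mulr0 ?mul0r ?addr0 ?add0r.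
  rewrite eM char_poly_trig ?diag_mx_is_trig // prod_tens.
  by apply: eq_bigr => i _; apply: eq_bigr => j _; rewrite !mxE eqxx mulr1n mxtens_indexK.
split => //=.
- by rewrite !realD.
- by rewrite !lerD2l le01 lerD2r le01 lexx.
rewrite eH char_poly_conjQ // cpM !prod2 !big_cons big_nil mulr1.
have [[-> ->]|[-> ->]] := perm2 pe; rewrite !polyCD; ring.
Qed.


Lemma cap4 (rho H : 'M[C]_(2*2)) : capacity rho H =
  ((spectrum H)`_3 - (spectrum H)`_0) * ((spectrum rho)`_3 - (spectrum rho)`_0) +
  ((spectrum H)`_2 - (spectrum H)`_1) * ((spectrum rho)`_2 - (spectrum rho)`_1).
Proof.
rewrite /capacity (big_ord_recl 3) !big_ord_recl big_ord0 /=.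
ring.
Qed.

Lemma cap2 (rho H : 'M[C]_2) : capacity rho H =
  ((spectrum H)`_1 - (spectrum H)`_0) * ((spectrum rho)`_1 - (spectrum rho)`_0).
Proof.
rewrite /capacity !big_ord_recl big_ord0 /=.
ring.
Qed.


Lemma adjmxD m n (A B : 'M[C]_(m,n)) : adjmx (A + B) = adjmx A + adjmx B.
Proof. by apply/matrixP => i j; rewrite !mxE rmorphD. Qed.

Lemma adjmxZ m n c (A : 'M[C]_(m,n)) : adjmx (c *: A) = c^* *: adjmx A.
Proof. by apply/matrixP => i j; rewrite !mxE rmorphM. Qed.

Lemma hermD n (A B : 'M[C]_n) : hermitian A -> hermitian B -> hermitian (A + B).
Proof. by rewrite /hermitian adjmxD => -> ->. Qed.

Lemma hermZ n c (A : 'M[C]_n) : c \is Num.real -> hermitian A -> hermitian (c *: A).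
Proof. by rewrite /hermitian adjmxZ => /CrealP -> ->. Qed.

Lemma herm_tens m n (A : 'M[C]_m) (B : 'M[C]_n) :
  hermitian A -> hermitian B -> hermitian (tensmx A B).
Proof. by rewrite /hermitian adj_tens => -> ->. Qed.

Lemma herm1 n : hermitian (1%:M : 'M[C]_n).
Proof. by apply/matrixP => i j; rewrite !mxE rmorphMn rmorph1 eq_sym. Qed.

Lemma hermE n (A : 'M[C]_n) i j : hermitian A -> A i j = (A j i)^*.
Proof. by move=> hA; rewrite -{1}hA adjmxE. Qed.

Lemma herm_sx : hermitian (sx C).
Proof.
apply/matrixP => i j; rewrite !mxE.
case: i => [[|[|//]] ?]; case: j => [[|[|//]] ?] /=; by rewrite ?conjC0 ?rmorph0 ?rmorph1.
Qed.

Lemma herm_sy : hermitian (sy C).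
Proof.
apply/matrixP => i j; rewrite !mxE.
case: i => [[|[|//]] ?]; case: j => [[|[|//]] ?] /=; rewrite ?rmorph0 //; first exact: conjCi.
by apply: (canLR (@conjCK C)); rewrite conjCi.
Qed.

Lemma herm_sz : hermitian (sz C).
Proof.
apply/matrixP => i j; rewrite !mxE.
case: i => [[|[|//]] ?]; case: j => [[|[|//]] ?] /=; by rewrite ?rmorph0 ?rmorphN ?rmorph1.
Qed.

Lemma tr_sx : \tr (sx C) = 0.
Proof. by rewrite /mxtrace sum2 !mxE /= addr0. Qed.
Lemma tr_sy : \tr (sy C) = 0.
Proof. by rewrite /mxtrace sum2 !mxE /= addr0. Qed.
Lemma tr_sz : \tr (sz C) = 0.
Proof. by rewrite /mxtrace sum2 !mxE /= subrr. Qed.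

Lemma herm_ptB (rho : 'M[C]_(2*2)) : hermitian rho -> hermitian (ptraceB rho).
Proof.
move=> hr; apply/matrixP => i j; rewrite !mxE rmorph_sum; apply: eq_bigr => k _.
by rewrite [rho (mxtens_index (i, k)) _](hermE _ _ hr).
Qed.

Lemma herm_ptA (rho : 'M[C]_(2*2)) : hermitian rho -> hermitian (ptraceA rho).
Proof.
move=> hr; apply/matrixP => i j; rewrite !mxE rmorph_sum; apply: eq_bigr => k _.
by rewrite [rho (mxtens_index (k, i)) _](hermE _ _ hr).
Qed.


Lemma sorted4 (s : seq C) : sorted <=%R s -> size s = 4 ->
  [/\ s`_0 <= s`_1, s`_1 <= s`_2 & s`_2 <= s`_3].
Proof.
by case: s => [|x0 [|x1 [|x2 [|x3 []]]]] //= /and4P [-> -> -> _].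
Qed.

Lemma sorted2 (s : seq C) : sorted <=%R s -> size s = 2 -> s`_0 <= s`_1.
Proof. by case: s => [|x0 [|x1 []]] //= /andP [-> _]. Qed.

End S.

Unset Implicit Arguments.

Theorem mainTheorem2 (C : numClosedFieldType) (b : bool) (E J alpha beta : C)
  (rho : 'M[C]_(2 * 2)) :
  E \is Num.real -> 0 < E -> J \is Num.real -> 0 < J ->
  alpha \is Num.real -> `|alpha| <= 1 ->
  (beta = 1 \/ (beta = 0 /\ alpha != 0)) ->
  density_matrix rho ->
  capacity rho (H0 b E) <= capacity rho (H0 b E + Hint alpha beta J) /\
  capacity (ptraceB rho) (Hloc b E) + capacity (ptraceA rho) (Hloc b E)
    <= capacity rho (H0 b E + Hint alpha beta J).
Proof.
move=> Er _ Jr _ ar _ hb [hr _].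
have br : beta \is Num.real by case: hb => [->|[-> _]]; rewrite ?real1 ?real0.
have hh : hermitian (Hloc b E).
  by rewrite /Hloc; case: b; apply: hermZ => //; [apply: hermD; [exact: herm_sx|exact: herm_sy] | exact: herm_sz].
set h := Hloc b E in hh *.
have [w0 [w1 [onbw ew0 ew1 ssh]]] := eig2 hh.
have onbw' := onbw; case: onbw' => uw0 uw1 _.
set a0 := (spectrum h)`_0 in ew0; set a1 := (spectrum h)`_1 in ew1.
have le_a : a0 <= a1 by case: ssh => sz _ so _; exact: sorted2.
have ra0 : Ray h w0 = a0 := ray_eig uw0 ew0.
have ra1 : Ray h w1 = a1 := ray_eig uw1 ew1.
have sH0 : spectrum (H0 b E) = [:: a0 + a0; a0 + a1; a0 + a1; a1 + a1].
  by rewrite /H0 /I2 -/h; exact: spec_H0.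
set H := H0 b E + Hint alpha beta J.
have hH : hermitian H.
  apply: hermD; first by apply: hermD; apply: herm_tens => //; exact: herm1.
  have hx := herm_sx C; have hy := herm_sy C; have hz := herm_sz C.
  apply: hermD; apply: hermZ.
  - by rewrite realM.
  - by apply: hermD; apply: herm_tens.
  - by rewrite realM.
  - by apply: herm_tens.
have rayH w : unitv w -> Ray H (tensmx w w) = (Ray h w + Ray h w) +
    alpha * J * (Ray (sx C) w * Ray (sx C) w + Ray (sy C) w * Ray (sy C) w) +
    beta * J * (Ray (sz C) w * Ray (sz C) w).
  move=> uw; have r1 : Ray 1%:M w = 1 by apply/unitvE.
  rewrite /H /H0 /Hint /I2 -/h !rayD !rayZ !rayD (ray_tens h) (ray_tens 1%:M h).
  rewrite (ray_tens (sx C)) (ray_tens (sy C)) (ray_tens (sz C)) r1 mulr1 mul1r.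
  by rewrite addrA.
have tr0 (A : 'M[C]_2) : \tr A = 0 -> Ray A w0 = - Ray A w1.
  by move=> t; apply: (addIr (Ray A w1)); rewrite (ray_trace A onbw) t addNr.
have [e0 e3] := ray_bounds (n:=3) hH (unit_tens uw1 uw1).
have [e0' e3'] := ray_bounds (n:=3) hH (unit_tens uw0 uw0).
have gap : (a1 + a1) - (a0 + a0) <= (spectrum H)`_3 - (spectrum H)`_0.
  apply: le_trans (lerB e3 e0').
  rewrite !rayH // ra0 ra1 (tr0 _ (tr_sx C)) (tr0 _ (tr_sy C)) (tr0 _ (tr_sz C)).
  by rewrite le_eqVlt; apply/orP; left; apply/eqP; ring.
have [_ [_ [_ _ _ _ [szH _ soH _]]]] := spec_decomp hH.
have [_ [_ [_ _ _ _ [szR _ soR _]]]] := spec_decomp hr.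
have [l01 l12 l23] := sorted4 soR szR.
have [e01 e12 e23] := sorted4 soH szH.
have l03 : (spectrum rho)`_0 <= (spectrum rho)`_3 by apply: le_trans l23; apply: le_trans l12.
have cap1 : capacity rho (H0 b E) <= capacity rho H.
  rewrite !cap4 sH0 /= subrr mul0r addr0.
  apply: (@le_trans _ _ (((spectrum H)`_3 - (spectrum H)`_0) * ((spectrum rho)`_3 - (spectrum rho)`_0))).
    by apply: ler_wpM2r => //; rewrite subr_ge0.
  by rewrite lerDl mulr_ge0 // subr_ge0.
split => //.
have hA := herm_ptB hr; have hB := herm_ptA hr.
have [u0 [u1 [onbu eu0 eu1 ssA]]] := eig2 hA.
have [v0 [v1 [onbv ev0 ev1 ssB]]] := eig2 hB.
have onbu' := onbu; case: onbu' => uu0 uu1 _.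
have onbv' := onbv; case: onbv' => uv0 uv1 _.
rewrite !cap2 -/a0 -/a1.
rewrite -(ray_eig uu1 eu1) -(ray_eig uu0 eu0) -(ray_eig uv1 ev1) -(ray_eig uv0 ev0).
rewrite (ptrB _ u0 onbv) (ptrB _ u1 onbv) (ptrA _ v0 onbu) (ptrA _ v1 onbu).
apply: le_trans cap1; rewrite cap4 sH0 /= subrr mul0r addr0.
apply: (@le_trans _ _ ((a1 - a0) * (2 * (Ray rho (tensmx u1 v1) - Ray rho (tensmx u0 v0))))).
  by rewrite le_eqVlt; apply/orP; left; apply/eqP; ring.
have -> : (a1 + a1 - (a0 + a0)) * ((spectrum rho)`_3 - (spectrum rho)`_0) =
   (a1 - a0) * (2 * ((spectrum rho)`_3 - (spectrum rho)`_0)) by ring.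
apply: ler_wpM2l; first by rewrite subr_ge0.
apply: ler_wpM2l => //.
have [_ b11] := ray_bounds (n:=3) hr (unit_tens uu1 uv1).
have [b00 _] := ray_bounds (n:=3) hr (unit_tens uu0 uv0).
exact: lerB.
Qed.
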